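(* Let $G$ be a directed multigraph, let $s$ and $t$ be two distinct vertices, let $S$ be the latest $(s,t)$-mincut, let $R$ be the set of vertices reachable from $s$ in the induced subgraph $G[S]$, and let $x$ be an exit point of $S$ with $x\neq t$. Then $\lambda(R\cup\{x\},t)>\mathit{out}(S)$.
   Context: For a vertex set $S$, $\mathit{out}(S)$ is the number of edges $(x,y)$ with $x\in S$, $y\notin S$ (outgoing edges of $S$); an exit point of $S$ is the head of an outgoing edge of $S$. For disjoint vertex sets $X,Y$, $\lambda(X,Y)$ is the minimum of $\mathit{out}(S)$ over vertex sets $S$ with $X\subseteq S$, $S\cap Y=\emptyset$ (single vertices are identified with singletons). An $(s,t)$-mincut is a set $S$ with $s\in S$, $t\notin S$, $\mathit{out}(S)=\lambda(s,t)$; the latest $(s,t)$-mincut is the inclusion-wise maximum $(s,t)$-mincut (which exists). *)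

(* Defs.v *)
(* A directed multigraph on a finite vertex type V with a
   finite edge type E and endpoint maps src, dst : E -> V (parallel edges and
   loops allowed). *)
From mathcomp Require Import all_boot.
Set Implicit Arguments. Unset Strict Implicit. Unset Printing Implicit Defensive.

Section Graph.
Variables (V E : finType) (src dst : E -> V).

Definition out_edges (S : {set V}) : {set E} :=
  [set e | (src e \in S) && (dst e \notin S)].

Definition out (S : {set V}) : nat := #|out_edges S|.

Definition exit_point (S : {set V}) (x : V) : Prop :=
  exists e, e \in out_edges S /\ dst e = x.

(* lambda(X,Y) = min of out(S) over X \subset S, S disjoint from Y.
   (out S <= #|E| always, so #|E| is a neutral start value; when no such S
   exists the value is #|E|, never relevant below.) *)
Definition lambda (X Y : {set V}) : nat :=
  \big[minn/#|E|]_(S : {set V} | (X \subset S) && [disjoint S & Y]) out S.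

Definition is_mincut (s t : V) (S : {set V}) : Prop :=
  s \in S /\ t \notin S /\ out S = lambda [set s] [set t].

Definition is_latest_mincut (s t : V) (S : {set V}) : Prop :=
  is_mincut s t S /\ forall S', is_mincut s t S' -> S' \subset S.

Definition induced_rel (S : {set V}) : rel V :=
  fun u v => [exists e, [&& src e == u, dst e == v, u \in S & v \in S]].

Definition reach_in (S : {set V}) (s : V) : {set V} :=
  [set v | connect (induced_rel S) s v].

End Graph.

(* Main.v *)
Require Import Defs.
From mathcomp Require Import all_boot.

Section Aux.
Variables (V E : finType) (src dst : E -> V).

Lemma lambda_le (A B T : {set V}) :
  A \subset T -> [disjoint T & B] -> lambda src dst A B <= out src dst T.
Proof.
move=> h1 h2; rewrite /lambda.
have : T \in index_enum {set V} by rewrite mem_index_enum.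
have : (A \subset T) && [disjoint T & B] by rewrite h1 h2.
elim: (index_enum _) => [|a r IH] PT //; rewrite inE big_cons => /orP[/eqP<-|Tr].
  by rewrite PT geq_minl.
case: ifP => _; last exact: IH.
by rewrite geq_min IH // orbT.
Qed.

Lemma outE (X : {set V}) :
  out src dst X = \sum_e ((src e \in X) && (dst e \notin X) : nat).
Proof.
rewrite /out /out_edges -sum1_card big_mkcond /=.
by apply: eq_bigr => e _; rewrite inE; case: ifP.
Qed.

Lemma submod (A B : {set V}) :
  out src dst (A :&: B) + out src dst (A :|: B) <= out src dst A + out src dst B.
Proof.
rewrite !outE -!big_split /=; apply: leq_sum => e _.
rewrite !inE.
by case: (src e \in A); case: (src e \in B); case: (dst e \in A); case: (dst e \in B).
Qed.

End Aux.

Theorem mainTheorem6 (V E : finType) (src dst : E -> V) (s t : V)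
  (S : {set V}) (x : V) :
  s != t ->
  is_latest_mincut src dst s t S ->
  exit_point src dst S x ->
  x != t ->
  out src dst S < lambda src dst (x |: reach_in src dst S s) [set t].
Proof.
move=> st [[sS [tS outS]] latest] [e [eout ex]] xt.
have xS : x \notin S by move: eout; rewrite inE ex => /andP[].
have key : forall T : {set V}, s \in T -> x \in T -> t \notin T ->
    out src dst S < out src dst T.
  move=> T sT xT tT; rewrite ltnNge; apply/negP => hle.
  have dj : forall U : {set V}, t \notin U -> [disjoint U & [set t]].
    by move=> U tU; rewrite disjoint_sym disjoints1.
  have h1 : out src dst S <= out src dst (S :|: T).
    by rewrite outS; apply: lambda_le; [by rewrite sub1set !inE sS | apply: dj; by rewrite !inE (negbTE tS) (negbTE tT)].
  have h2 : out src dst S <= out src dst (S :&: T).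
    by rewrite outS; apply: lambda_le; [by rewrite sub1set !inE sS sT | apply: dj; by rewrite !inE (negbTE tS)].
  have h3 := @submod _ _ src dst S T.
  have Heq : out src dst (S :|: T) = lambda src dst [set s] [set t].
    rewrite -outS; apply/eqP; rewrite eqn_leq h1 andbT.
    rewrite -(leq_add2l (out src dst (S :&: T))).
    apply: (leq_trans h3); rewrite [X in _ <= X]addnC leq_add2l.
    exact: leq_trans hle h2.
  have : S :|: T \subset S.
    apply: latest; split; first by rewrite inE sS.
    split; last exact: Heq.
    by rewrite !inE (negbTE tS) (negbTE tT).
  move/subsetP/(_ x); rewrite inE xT orbT => /(_ isT).
  by rewrite (negbTE xS).
have sR : s \in reach_in src dst S s by rewrite inE connect0.
rewrite /lambda; apply: (big_ind (fun n => out src dst S < n)).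
- apply: (@leq_trans (out src dst [set~ t])); last first.
    by rewrite /out max_card.
  by apply: key; rewrite !inE ?eqxx // ?(negbTE st) ?(negbTE xt).
- by move=> a b ha hb; rewrite leq_min ha hb.
move=> T /andP[sub dis]; apply: key.
- by move/subsetP: sub; apply; rewrite in_setU1 sR orbT.
- by move/subsetP: sub; apply; rewrite !inE eqxx.
- by move: dis; rewrite disjoint_sym disjoints1.
Qed.
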